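(* Let $f$ be a germ of a holomorphic function at the origin of $\mathbb C$, let $m\in\mathbb N$ and $k\in\mathbb N$. If for every $n\ge k$ there is $R_n\in\mathcal R_{nm}$ such that $f-R_n$ vanishes to order at least $n+m+2$ at the origin, then $f\in\mathcal R_{km}$ (i.e. $f$ is the germ of a function in $\mathcal R_{km}$).
   Context: $\mathcal R_{nm}$ is the set of rational functions $P/Q$ with $P$ a polynomial of degree at most $n$ and $Q\not\equiv0$ a polynomial of degree at most $m$. *)

(* Defs.v *)
From HB Require Import structures.
From mathcomp Require Import all_boot all_order all_algebra.
From mathcomp Require Import reals.
From mathcomp Require Import complex.
Set Implicit Arguments. Unset Strict Implicit. Unset Printing Implicit Defensive.
Import Order.TTheory GRing.Theory Num.Theory.
Local Open Scope ring_scope.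
Local Open Scope complex_scope.

(* A holomorphic germ at 0 in C is represented by its Taylor coefficient
   sequence a : nat -> C (C = R[i], R a real field of reals), required to have
   positive radius of convergence. *)
Definition convergent_germ (R : realType) (a : nat -> R[i]) : Prop :=
  exists r : R, (0 < r)%R /\ exists M : R,
    forall n, (`|a n| * (r ^+ n)%:C <= M%:C).

Definition in_Rnm (R : realType) (n m : nat) (P Q : {poly R[i]}) : Prop :=
  (size P <= n.+1)%N /\ (size Q <= m.+1)%N /\ Q != 0.

Definition poly_ord (R : realType) (Q : {poly R[i]}) : nat :=
  find (fun c => c != 0) Q.

Definition QfP_coef (R : realType) (a : nat -> R[i]) (P Q : {poly R[i]}) (i : nat)
  : R[i] := \sum_(j < i.+1) Q`_j * a (i - j)%N - P`_i.

(* the meromorphic germ f - P/Q vanishes to order at least N at 0: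
   writing Q = z^s Q1 with Q1(0) <> 0 (s = poly_ord Q), this means that the
   power series Q f - P vanishes to order at least N + s. *)
Definition diff_vanishes_order (R : realType) (a : nat -> R[i])
  (P Q : {poly R[i]}) (N : nat) : Prop :=
  forall i, (i < N + poly_ord Q)%N -> QfP_coef a P Q i = 0.

(* f is (the germ of) the rational function P/Q with (P,Q) in R_{km}:
   as germs at 0, f = P/Q, i.e. Q f = P as power series. *)
Definition germ_in_Rnm (R : realType) (n m : nat) (a : nat -> R[i]) : Prop :=
  exists P Q : {poly R[i]}, in_Rnm n m P Q /\ forall i, QfP_coef a P Q i = 0.

(* Main.v *)
Require Import Defs.
From HB Require Import structures.
From mathcomp Require Import all_boot all_order all_algebra.
From mathcomp Require Import reals complex.
From mathcomp Require Import zify ring.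
Local Open Scope ring_scope.
Import GRing.Theory.

Section Aux.
Variable R : realType.
Implicit Types p q g P Q : {poly R[i]}.

Definition lz (L : nat) p := forall j, (j < L)%N -> p`_j = 0.

Lemma lz_mull L q p : lz L p -> lz L (q * p).
Proof.
move=> h j hj; rewrite coefM big1 // => l _.
by rewrite h ?mulr0 //; apply: leq_ltn_trans (leq_subr _ _) hj.
Qed.

Lemma lz_sub L p q : lz L p -> lz L q -> lz L (p - q).
Proof. by move=> hp hq j hj; rewrite coefB hp // hq // subr0. Qed.

Lemma lz_le L L' p : (L' <= L)%N -> lz L p -> lz L' p.
Proof. by move=> hL h j hj; apply: h; apply: leq_trans hj hL. Qed.

Lemma lz_size0 L p : lz L p -> (size p <= L)%N -> p = 0.
Proof.
move=> h hs; apply/polyP => j; rewrite coef0.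
case: (ltnP j L) => hj; first exact: h.
by apply: nth_default; apply: leq_trans hs hj.
Qed.

Lemma trunc_coef (a : nat -> R[i]) P Q N i : (i < N)%N ->
  (Q * \poly_(j < N) a j - P)`_i = QfP_coef a P Q i.
Proof.
move=> hi; rewrite coefB coefM /QfP_coef; congr (_ - _).
apply: eq_bigr => j _; rewrite coef_poly.
by have -> : (i - j < N)%N by apply: leq_ltn_trans (leq_subr _ _) hi.
Qed.

Lemma lz_cancel L q g : q != 0 -> lz (L + poly_ord q) (q * g) -> lz L g.
Proof.
move=> q0 h.
have hs : has (fun c => c != 0) q.
  apply/hasP; exists (lead_coef q); last by rewrite lead_coef_eq0.
  rewrite /lead_coef; apply: mem_nth.
  by rewrite prednK // size_poly_gt0.
set s := poly_ord q.
have qs : q`_s != 0 by exact: (nth_find 0 hs).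
have qlt : forall j, (j < s)%N -> q`_j = 0.
  move=> j hj; have := before_find 0 hj; by move/negbFE/eqP.
elim/ltn_ind => i IH hi.
have hsi : (s + i < (s + i).+1)%N by [].
have hlt : (s + i < L + s)%N by rewrite addnC ltn_add2r.
have := h (s + i) hlt.
have hso : (s < (s + i).+1)%N by rewrite ltnS leq_addr.
rewrite coefM (bigD1 (Ordinal hso)) //= big1 ?addr0.
  by rewrite addKn => /eqP; rewrite mulf_eq0 (negbTE qs) /= => /eqP.
move=> [j hj] /= hne.
have hne' : j != s by apply: contra hne => /eqP e; apply/eqP/val_inj.
case: (ltngtP j s) hne' => // hjs _.
  by rewrite qlt ?mul0r.
rewrite IH ?mulr0 //; lia.
Qed.

Lemma size_MB (P Q P' Q' : {poly R[i]}) L :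
  (size (Q * P')%R <= L)%N -> (size (Q' * P)%R <= L)%N ->
  (size (Q * P' - Q' * P)%R <= L)%N.
Proof.
move=> h1 h2; apply: leq_trans (size_polyD _ _) _.
by rewrite size_polyN geq_max h1 h2.
Qed.

Lemma size_M_le (p q : {poly R[i]}) a b :
  (size p <= a.+1)%N -> (size q <= b.+1)%N -> (size (p * q)%R <= (a + b).+1)%N.
Proof.
move=> ha hb; apply: leq_trans (size_polyMleq _ _) _.
have : (size p + size q <= a.+1 + b.+1)%N by apply: leq_add.
lia.
Qed.

Lemma consec (a : nat -> R[i]) n m P Q P' Q' :
  (size P <= n.+2)%N -> (size Q <= m.+1)%N -> diff_vanishes_order a P Q (n + m + 2) ->
  (size P' <= n.+2)%N -> (size Q' <= m.+1)%N -> diff_vanishes_order a P' Q' (n + m + 2) ->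
  Q * P' = Q' * P.
Proof.
move=> hP hQ hv hP' hQ' hv'.
set N := (n + m + 2)%N; set F := \poly_(j < N) a j.
have hG : lz N (Q * F - P).
  move=> j hj; rewrite trunc_coef //; apply: hv; lia.
have hG' : lz N (Q' * F - P').
  move=> j hj; rewrite trunc_coef //; apply: hv'; lia.
have e : Q * P' - Q' * P = Q' * (Q * F - P) - Q * (Q' * F - P').
  by ring.
apply/eqP; rewrite -subr_eq0; apply/eqP; apply: (@lz_size0 N).
  by rewrite e; apply: lz_sub; apply: lz_mull.
apply: size_MB.
  have := @size_M_le Q P' m n.+1 hQ hP'; rewrite /N; lia.
have := @size_M_le Q' P m n.+1 hQ' hP; rewrite /N; lia.
Qed.

Lemma dvo_le (a : nat -> R[i]) P Q N N' : (N' <= N)%N ->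
  diff_vanishes_order a P Q N -> diff_vanishes_order a P Q N'.
Proof. move=> hN h i hi; apply: h; lia. Qed.

Lemma chain (a : nat -> R[i]) k m Pk Qk :
  in_Rnm k m Pk Qk -> diff_vanishes_order a Pk Qk (k + m + 2) ->
  (forall n : nat, (k <= n)%N ->
     exists P Q : {poly R[i]}, in_Rnm n m P Q /\ diff_vanishes_order a P Q (n + m + 2)) ->
  forall d P Q, in_Rnm (k + d) m P Q -> diff_vanishes_order a P Q (k + d + m + 2) ->
    Q * Pk = Qk * P.
Proof.
move=> [hPk [hQk _]] hvk H; elim=> [|d IH] P Q [hP [hQ _]] hv.
  rewrite addn0 in hP hv.
  apply: (@consec a k m) => //; apply: leq_trans (leqnSn _); assumption.
have [P0 [Q0 [[hP0 [hQ0 nz0]] hv0]]] := H (k + d)%N (leq_addr _ _).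
have IH0 := IH P0 Q0 (conj hP0 (conj hQ0 nz0)) hv0.
have e' : Q0 * P = Q * P0.
  apply: (@consec a (k + d) m) => //.
  - by apply: leq_trans hP0 _.
  - by rewrite addnS in hP.
  - by apply: dvo_le hv; lia.
apply: (mulfI nz0).
by rewrite mulrCA IH0 (mulrCA Q Qk) -e' mulrCA.
Qed.
End Aux.

Theorem proposition3p5 (R : realType) (a : nat -> R[i]) (m k : nat) :
  convergent_germ a ->
  (forall n : nat, (k <= n)%N ->
     exists P Q : {poly R[i]}, in_Rnm n m P Q /\ diff_vanishes_order a P Q (n + m + 2)) ->
  germ_in_Rnm k m a.
Proof.
move=> _ H.
have [Pk [Qk [hk hvk]]] := H k (leqnn k).
exists Pk, Qk; split => // i.
have [P [Q [hPQ hv]]] := H (k + i)%N (leq_addr _ _).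
have e := @chain R a k m Pk Qk hk hvk H i P Q hPQ hv.
case: hPQ => _ [_ nz].
set L := (k + i + m + 2)%N.
set N := (L + poly_ord Q)%N.
set F := \poly_(j < N) a j.
have hG : @lz R N (Q * F - P).
  by move=> j hj; rewrite trunc_coef //; apply: hv.
have e2 : Q * (Qk * F - Pk) = Qk * (Q * F - P).
  by rewrite !mulrBr e !mulrA (mulrC Q Qk).
have hGk : @lz R L (Qk * F - Pk).
  apply: (@lz_cancel R L Q _ nz); rewrite e2; exact: lz_mull.
rewrite -(@trunc_coef R a Pk Qk N i); last by rewrite /N /L; lia.
apply: hGk; rewrite /L; lia.
Qed.
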